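(* Let $\Theta=(\theta_k)_{k\ge1}$ be a sequence of positive real numbers such that the series $g(z)=\sum_{k\ge1}\frac{\theta_k}{k}z^k$ has radius of convergence $r\in(0,\infty)$, i.e. $\frac1r=\limsup_k\theta_k^{1/k}$. Let $(Y_\ell)_{\ell\ge1}$ be independent Poisson random variables, $Y_\ell$ with parameter $\frac{r^\ell\theta_\ell}{\ell}$, let $X_k=\sum_{\ell\mid k}\ell Y_\ell$ and $f(z)=\sum_{k\ge1}\frac{X_k}{k}z^k$. Then almost surely the radius of convergence of the power series $f$ is greater than or equal to $1$. *)

(* Defs.v *)
From HB Require Import structures.
From mathcomp Require Import all_boot all_order all_algebra.
From mathcomp Require Import all_classical all_reals all_analysis.
Set Implicit Arguments. Unset Strict Implicit. Unset Printing Implicit Defensive.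
Import Order.TTheory GRing.Theory Num.Theory.
Import numFieldNormedType.Exports.
Local Open Scope classical_set_scope.
Local Open Scope ring_scope.

Definition radius_of_convergence {R : realType} (a : nat -> R) : \bar R :=
  ereal_sup [set x%:E | x in
    [set rho : R | 0 <= rho /\ cvgn (series (fun k => `|a k| * rho ^+ k))]].

Definition mutually_independent {d : measure_display} {T : measurableType d}
  {R : realType} (P : probability T R) {I : eqType} (Y : I -> T -> R) : Prop :=
  forall (J : seq I) (B : I -> set R), uniq J ->
    (forall i, measurable (B i)) ->
    P (\bigcap_(i in [set i | i \in J]) (Y i @^-1` B i)) =
    (\prod_(i <- J) P (Y i @^-1` B i))%E.

(* Main.v *)
Require Import Defs.
From HB Require Import structures.
From mathcomp Require Import all_boot all_order all_algebra.
From mathcomp Require Import all_classical all_reals all_analysis.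
From mathcomp Require Import ring lra.
Import Order.TTheory GRing.Theory Num.Theory.
Import numFieldNormedType.Exports.
Local Open Scope classical_set_scope.
Local Open Scope ring_scope.

Section A.
Variable R : realType.

Lemma exp_coeffS (x : R) n : exp_coeff x n.+1 = x / n.+1%:R * exp_coeff x n.
Proof.
rewrite /exp_coeff /= factS natrM exprS.
have h1 : (n.+1%:R : R) != 0 by rewrite pnatr_eq0.
have h2 : (n`!%:R : R) != 0 by rewrite pnatr_eq0 -lt0n fact_gt0.
by field; rewrite h2 -(natrD _ 1 n) pnatr_eq0.
Qed.

Lemma exp_coeff_ge0' (x : R) n : 0 <= x -> 0 <= exp_coeff x n.
Proof. by move=> x0; rewrite /exp_coeff /= divr_ge0 // exprn_ge0. Qed.

Lemma series_nd (x : R) : 0 <= x -> nondecreasing_seq (series (exp_coeff x)).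
Proof.
move=> x0; apply/nondecreasing_seqP => n; rewrite seriesSr lerDl.
exact: exp_coeff_ge0'.
Qed.

Lemma series_le_expR (x : R) n : 0 <= x -> series (exp_coeff x) n <= expR x.
Proof.
move=> x0; apply: nondecreasing_cvgn_le; first exact: series_nd.
exact: is_cvg_series_exp_coeff.
Qed.

Lemma exp_tail (lam : R) (m : nat) : 0 < lam -> (0 < m)%N ->
  expR lam <= series (exp_coeff lam) m + lam / m%:R * expR lam.
Proof.
move=> l0 m0.
set T := series (exp_coeff lam).
set c := lam / m%:R.
have c0 : 0 <= c by rewrite divr_ge0 // ltW.
have Tge0 N : 0 <= T N.
  rewrite /T /series /= sumr_ge0 // => i _; exact: exp_coeff_ge0' (ltW l0).
have Tmono : {homo T : a b / (a <= b)%N >-> a <= b}.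
  exact: series_nd (ltW l0).
have Q N : T N.+1 <= T m + c * T N.
  elim: N => [|N IH].
    rewrite (le_trans (Tmono _ _ m0)) // lerDl mulr_ge0 //.
  case: (leqP N.+2 m) => hN.
    by rewrite (le_trans (Tmono _ _ hN)) // lerDl mulr_ge0.
  rewrite /T seriesSr -/T.
  have hs : exp_coeff lam N.+1 <= c * exp_coeff lam N.
    rewrite exp_coeffS /c ler_wpM2r //; first exact: exp_coeff_ge0' (ltW l0).
    rewrite ler_pdivlMr ?ltr0n // mulrC mulrA.
    by rewrite ler_pdivrMr ?ltr0n // mulrC ler_wpM2l ?(ltW l0) // ler_nat -ltnS.
  rewrite (le_trans (lerD IH hs)) // /T seriesSr -/T mulrDr addrA.
  done.
have Tle N : T N <= T m + c * expR lam.
  case: N => [|N]; first by rewrite (le_trans (Tmono _ _ (leq0n m))) // lerDl mulr_ge0 // expR_ge0.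
  rewrite (le_trans (Q N)) // lerD2l ler_wpM2l //.
  exact: series_le_expR (ltW l0).
rewrite [X in X <= _]/expR -/T.
apply: limr_le; first exact: is_cvg_series_exp_coeff.
by apply: nearW.
Qed.
End A.

Lemma prob_bad (R : realType) d (T : measurableType d) (P : probability T R) (Z : T -> R) (lam : R) (m : nat) :
  measurable_fun setT Z -> 0 < lam -> (0 < m)%N ->
  (forall n, P (Z @^-1` [set n%:R]) = (poisson_pmf lam n)%:E) ->
  (P (~` \big[setU/set0]_(n < m) (Z @^-1` [set (n : nat)%:R])) <= (lam / m%:R)%:E)%E.
Proof.
move=> mZ l0 m0 HZ.
have mZn (n : nat) : measurable (Z @^-1` [set n%:R]).
  by rewrite -[X in measurable X]setTI; apply: mZ => //; exact: measurable_set1.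
rewrite probability_setC; last by apply: bigsetU_measurable => n _; exact: mZn.
rewrite measure_bigsetU_ord //; last first.
  apply/trivIsetP => i j _ _ ij; apply/seteqP; split => // t /= [-> /eqP].
  rewrite eqr_nat => /eqP hij.
  by move: ij; rewrite -(inj_eq val_inj) /= hij eqxx.
rewrite (eq_bigr (fun i : 'I_m => (poisson_pmf lam i)%:E)); last by move=> i _; exact: HZ.
rewrite sumEFin -EFinB lee_fin.
have -> : \sum_(i < m) poisson_pmf lam i = series (exp_coeff lam) m * expR (- lam).
  rewrite seriesEord /= big_distrl /=; apply: eq_bigr => i _.
  by rewrite /poisson_pmf l0 /exp_coeff /=.
have := @exp_tail R lam m l0 m0.
set S := series _ m; move=> h.
have E0 : 0 < expR lam := expR_gt0 lam.
rewrite expRN.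
have -> : 1 - S * (expR lam)^-1 = (expR lam - S) / expR lam.
  by field; rewrite gt_eqF.
rewrite ler_pdivrMr //; lra.
Qed.

Lemma lam_bound (R : realType) (theta : nat -> R) (r : R)
  (Htheta_pos : forall k, (0 < k)%N -> 0 < theta k)
  (Hr_pos : 0 < r)
  (Hradius : radius_of_convergence
               (fun k => if k == 0%N then 0 else theta k / k%:R) = r%:E)
  (s : R) : 1 < s -> exists C : R, forall l, (0 < l)%N -> r ^+ l * theta l / l%:R <= C * s ^+ l.
Proof.
move=> s1.
have s0 : 0 < s by apply: lt_trans s1.
move: Hradius; set a := (X in radius_of_convergence X) => Hradius.
have : ((r / s)%:E < radius_of_convergence a)%E.
  by rewrite Hradius lte_fin ltr_pdivrMr // ltr_pMr.
move=> /ereal_sup_gt [_ [rho [rho0 cv] <-]]; rewrite lte_fin => rsrho.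
have rhop : 0 < rho by apply: lt_trans rsrho; rewrite divr_gt0.
move: (cvg_series_bounded cv) => /bounded_fun_has_ubound [M HM].
exists M => l l0.
have := HM _ (ex_intro2 _ _ l I erefl).
rewrite /a /= (negbTE (lt0n_neq0 l0)) ger0_norm; last exact: divr_ge0 (ltW (Htheta_pos _ l0)) (ler0n _ _).
move=> hl.
have -> : r ^+ l * theta l / l%:R = (theta l / l%:R * rho ^+ l) * (r / rho) ^+ l.
  rewrite exprMn exprVn; field.
  by apply/andP; split; [rewrite expf_neq0 // gt_eqF | rewrite pnatr_eq0 -lt0n].
rewrite (le_trans (ler_wpM2r _ hl)) //; first by rewrite exprn_ge0 // divr_ge0 // ltW.
have M0 : 0 <= M by apply: le_trans hl; rewrite mulr_ge0 ?exprn_ge0 ?(ltW rhop) // (divr_ge0 (ltW (Htheta_pos _ l0)) (ler0n _ _)).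
rewrite ler_wpM2l // lerXn2r ?nnegrE ?ltW ?divr_gt0 //.
by rewrite ltr_pdivrMr // mulrC -ltr_pdivrMr.
Qed.

Lemma bernoulli_ineq (R : realType) (b : R) n : 1 <= b -> 1 + n%:R * (b - 1) <= b ^+ n.
Proof.
move=> b1; elim: n => [|n IH]; first by rewrite mul0r addr0 expr0.
rewrite exprS.
have h : b * (1 + n%:R * (b - 1)) <= b * b ^+ n.
  by rewrite ler_wpM2l // (le_trans _ b1).
apply: le_trans h.
rewrite -natr1.
have n0 : 0 <= (n%:R : R) by [].
have h2 : 0 <= n%:R * ((b-1)*(b-1)) by rewrite mulr_ge0 // mulr_ge0 // subr_ge0.
nra.
Qed.

Lemma radius_ge1 (R : realType) (a : nat -> R) :
  (forall s : R, 1 < s -> exists D : R, forall k, `|a k| <= D * (k.+1%:R) ^+ 3 * s ^+ k) ->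
  (1%:E <= radius_of_convergence a)%E.
Proof.
move=> Ha.
have H rho : 0 <= rho < 1 -> (rho%:E <= radius_of_convergence a)%E.
  move=> /andP [rho0 rho1].
  apply: ereal_sup_ubound; exists rho => //; split => //.
  set e := (1 - rho) / 16.
  have e0 : 0 < e by rewrite divr_gt0 // subr_gt0.
  set b := 1 + e.
  have b1 : 1 < b by rewrite ltrDl.
  have bp : 0 < b := lt_trans ltr01 b1.
  have b4 : b ^+ 4 * rho < 1.
    have e16 : e * 16 = 1 - rho by rewrite /e mulfVK.
    rewrite /b.
    have e1 : e <= 1 / 16 by rewrite /e ler_pM2r // lerBlDr lerDl.
    have -> : (1 + e) ^+ 4 = 1 + e * (4 + e * (6 + e * (4 + e))) by ring.
    have q1 : 4 + e <= 5 by lra.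
    have q2 : e * (4 + e) <= 1 by nra.
    have q3 : 6 + e * (4 + e) <= 7 by lra.
    have q4 : e * (6 + e * (4 + e)) <= 1 by nra.
    have q5 : 4 + e * (6 + e * (4 + e)) <= 5 by lra.
    have q6 : e * (4 + e * (6 + e * (4 + e))) <= 5 * e by nra.
    have q7 : (1 + e * (4 + e * (6 + e * (4 + e)))) * rho <= (1 + 5 * e) * rho.
      by rewrite ler_wpM2r // lerD2l.
    apply: le_lt_trans q7 _.
    have : e * rho < e by rewrite gtr_pMr.
    lra.
  have [D HD] := Ha b b1.
  have D0 : 0 <= D by have := HD 0%N; rewrite expr0 mulr1 expr1n mulr1; apply: le_trans.
  have bm1 : 0 < b - 1 by rewrite subr_gt0.
  apply: (@series_le_cvg _ _ (geometric (D * b ^+ 3 / (b - 1) ^+ 3) (b ^+ 4 * rho))).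
  - by move=> k; rewrite mulr_ge0 // exprn_ge0.
  - have b0 : 0 <= b by exact: ltW (lt_trans ltr01 b1).
    move=> k; rewrite /geometric /=.
    by rewrite !mulr_ge0 // ?exprn_ge0 // ?mulr_ge0 // ?invr_ge0 ?exprn_ge0 // ?ltW // ?exprn_ge0.
  - move=> k; rewrite /geometric /=.
    set u := (k.+1%:R : R); set B := b ^+ k; set P := rho ^+ k.
    have P0 : 0 <= P by rewrite exprn_ge0.
    have B0 : 0 <= B by rewrite exprn_ge0 // (le_trans _ (ltW b1)).
    have hu : u * (b - 1) <= b * B.
      rewrite /B -exprS (le_trans _ (@bernoulli_ineq _ b k.+1 (ltW b1))) //.
      by rewrite lerDr.
    have h3 : u ^+ 3 <= (b * B) ^+ 3 / (b - 1) ^+ 3.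
      rewrite ler_pdivlMr ?exprn_gt0 // -exprMn lerXn2r // ?nnegrE ?mulr_ge0 ?ltW //.
      by rewrite /B exprn_gt0.
    apply: (le_trans (ler_wpM2r P0 (HD k))).
    rewrite -/u -/B.
    apply: (@le_trans _ _ (D * ((b * B) ^+ 3 / (b - 1) ^+ 3) * B * P)).
      by rewrite ler_wpM2r // ler_wpM2r // ler_wpM2l.
    rewrite /B /P [(b ^+ 4 * rho) ^+ k]exprMn -exprM mulnC exprM.
    rewrite le_eqVlt; apply/orP; left; apply/eqP; field.
    by rewrite gt_eqF.
  - apply: is_cvg_geometric_series.
    by rewrite ger0_norm // mulr_ge0 // exprn_ge0 // (le_trans _ (ltW b1)).
have H0 : (0%:E <= radius_of_convergence a)%E by apply: H; rewrite lexx ltr01.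
case E : (radius_of_convergence a) H0 => [x| |] //; last by move=> _; rewrite leey.
rewrite lee_fin => x0.
rewrite lee_fin leNgt; apply/negP => x1.
have := H ((x + 1) / 2); rewrite E lee_fin.
have h : 0 <= (x + 1) / 2 < 1.
  apply/andP; split; first by rewrite divr_ge0 // addr_ge0.
  by rewrite ltr_pdivrMr //; lra.
move=> /(_ h); rewrite ler_pdivrMr //; lra.
Qed.

Lemma telesc_bound (R : realType) N :
  \sum_(0 <= j < N) (1 / (j.+1%:R * j.+2%:R) : R) = 1 - 1 / N.+1%:R.
Proof.
elim: N => [|N IH]; first by rewrite big_geq // divr1 subrr.
rewrite big_nat_recr //= IH.
field.
have h1 : (1 + N%:R : R) != 0 by rewrite -(natrD _ 1 N) pnatr_eq0.
have h2 : (2 + N%:R : R) != 0 by rewrite -(natrD _ 2 N) pnatr_eq0.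
by rewrite h1 h2.
Qed.

Theorem mainTheorem6 (R : realType) (theta : nat -> R) (r : R)
  (Htheta_pos : forall k, (0 < k)%N -> 0 < theta k)
  (Hr_pos : 0 < r)
  (Hradius : radius_of_convergence
               (fun k => if k == 0%N then 0 else theta k / k%:R) = r%:E)
  (d : measure_display) (T : measurableType d) (P : probability T R)
  (Y : nat -> T -> R)
  (HYmeas : forall l, measurable_fun setT (Y l))
  (HYpoisson : forall l n, (0 < l)%N ->
     P (Y l @^-1` [set n%:R]) = (poisson_pmf (r ^+ l * theta l / l%:R) n)%:E)
  (HYindep : mutually_independent P (fun l : nat => Y l.+1)) :
  let X := fun (k : nat) (t : T) =>
    \sum_(l < k.+1 | (0 < l)%N && (l %| k)%N) l%:R * Y l t in
  {ae P, forall t,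
     (1%:E <= radius_of_convergence
               (fun k => if k == 0%N then 0%R else (X k t / k%:R)%R))%E}.
Proof.
move=> X.
pose lam l := r ^+ l * theta l / l%:R.
have lam0 l : (0 < l)%N -> 0 < lam l.
  move=> l0; rewrite /lam divr_gt0 ?ltr0n // mulr_gt0 ?exprn_gt0 //; exact: Htheta_pos.
pose m l := (Num.truncn (lam l * (l%:R * l.+1%:R))).+1.
pose G l := \big[setU/set0]_(n < m l) (Y l @^-1` [set (n : nat)%:R]).
pose F j := ~` G j.+1.
have mYn l (n : nat) : measurable (Y l @^-1` [set n%:R]).
  by rewrite -[X in measurable X]setTI; apply: HYmeas => //; exact: measurable_set1.
have mF j : measurable (F j).
  by apply: measurableC; apply: bigsetU_measurable => n _; exact: mYn.
have PF j : (P (F j) <= (1 / (j.+1%:R * j.+2%:R))%:E)%E.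
  have h := @prob_bad R d T P (Y j.+1) (lam j.+1) (m j.+1) (HYmeas _) (lam0 _ (ltn0Sn j)) (ltn0Sn _) (fun n => HYpoisson _ n (ltn0Sn j)).
  apply: (le_trans h); rewrite lee_fin.
  have hx : 0 <= lam j.+1 * (j.+1%:R * j.+2%:R) by rewrite mulr_ge0 // ltW // lam0.
  have /andP [_ hm] := truncn_itv hx.
  have Q0 : 0 < (j.+1%:R * j.+2%:R : R) by rewrite mulr_gt0.
  rewrite ler_pdivrMr ?ltr0n // mul1r ler_pdivlMl //.
  by rewrite mulrC ltW.
have sumF : (\sum_(j <oo) P (F j) < +oo)%E.
  have h0 : forall i, (0 <= i)%N -> xpredT i -> (0 <= P (F i))%E.
    by move=> i _ _; exact: measure_ge0.
  apply: (le_lt_trans (@lee_nneseries R _ (fun j => (1 / (j.+1%:R * j.+2%:R))%:E) xpredT 0 h0 (fun n _ => PF n))).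
  apply: (@le_lt_trans _ _ 1%:E); last exact: ltry.
  apply: lime_le.
    by apply: is_cvg_nneseries => n _ _; rewrite lee_fin divr_ge0 // mulr_ge0.
  apply: nearW => N; rewrite sumEFin lee_fin telesc_bound.
  by rewrite gerBl divr_ge0.
have PL := @lim_sup_set_cvg0 d T R P F mF sumF.
exists (lim_sup_set F); split => //.
  by apply: bigcap_measurable => // k _; apply: bigcup_measurable => j _; exact: mF.
move=> t /=; apply: contra_notP => nL.
have [N HN] : exists N, forall j, (N <= j)%N -> G j.+1 t.
  move/existsNP: nL => [N hN]; exists N => j Nj.
  case: (pselect (G j.+1 t)) => // nG; exfalso; apply: hN; exists j => //.
have hYb l : (N < l)%N -> `|Y l t| <= lam l * (l%:R * l.+1%:R).
  case: l => // l Nl; have := HN l Nl.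
  rewrite /G -(bigcup_mkord _ (fun n : nat => Y l.+1 @^-1` [set n%:R])) => -[n /= nlt ->].
  have hx : 0 <= lam l.+1 * (l.+1%:R * l.+2%:R) by rewrite mulr_ge0 // ltW // lam0.
  have /andP [ht _] := truncn_itv hx.
  by rewrite normr_nat (le_trans _ ht) // ler_nat -ltnS.
pose M := \sum_(l < N.+1) `|Y l t|.
have M0 : 0 <= M by rewrite sumr_ge0.
have hY l : (0 < l)%N -> `|Y l t| <= M + lam l * (l%:R * l.+1%:R).
  move=> l0; have hx : 0 <= lam l * (l%:R * l.+1%:R) by rewrite mulr_ge0 // ltW // lam0.
  case: (leqP l N) => hl.
    rewrite (@le_trans _ _ M) //; last by rewrite lerDl.
    rewrite /M (bigD1 (Ordinal (hl : (l < N.+1)%N))) //=.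
    by rewrite lerDl sumr_ge0.
  by rewrite (le_trans (hYb _ hl)) // lerDr.
apply: radius_ge1 => s s1.
have [C HC] := @lam_bound R theta r Htheta_pos Hr_pos Hradius s s1.
have s0 : 0 <= s by apply: ltW (lt_trans ltr01 s1).
exists (M + `|C|) => -[|k] /=.
  by rewrite normr0 !mulr_ge0 // ?exprn_ge0 // addr_ge0.
set K := k.+1.
set B := K%:R * ((M + `|C|) * K.+1%:R ^+ 2 * s ^+ K).
have B0 : 0 <= B by rewrite !mulr_ge0 // ?exprn_ge0 // addr_ge0.
have hterm (l : 'I_K.+1) : (0 < l)%N && (l %| K)%N -> `|l%:R * Y l t| <= B.
  move=> /andP [l0 _].
  have lK : (l <= K)%N by rewrite -ltnS.
  rewrite normrM normr_nat /B.
  apply: ler_pM => //; first by rewrite ler_nat.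
  apply: (le_trans (hY _ l0)).
  have h1 : lam l <= `|C| * s ^+ K.
    apply: (le_trans (HC _ l0)).
    apply: (le_trans (ler_wpM2r (exprn_ge0 _ s0) (real_ler_norm (num_real C)))).
    by rewrite ler_wpM2l // ler_weXn2l // ltW.
  set q := (K.+1%:R ^+ 2 : R).
  have hq : (l%:R * l.+1%:R : R) <= q.
    by rewrite /q expr2 ler_pM // ler_nat // ltnW.
  have lam0' : 0 <= lam l by rewrite ltW // lam0.
  have lamb : lam l * (l%:R * l.+1%:R) <= `|C| * s ^+ K * q.
    by rewrite ler_pM // mulr_ge0.
  have hsq : 1 <= q * s ^+ K.
    apply: mulr_ege1; last exact: exprn_ege1 (ltW s1).
    by rewrite /q exprn_ege1 // ler1n.
  apply: (@le_trans _ _ (M * (q * s ^+ K) + `|C| * s ^+ K * q)).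
    by apply: lerD; [rewrite ler_peMr | exact: lamb].
  by rewrite le_eqVlt; apply/orP; left; apply/eqP; rewrite /q; ring.
have hX : `|X K t| <= K.+1%:R * B.
  rewrite /X; apply: (le_trans (ler_norm_sum _ _ _)).
  apply: (@le_trans _ _ (\sum_(l < K.+1 | (0 < l)%N && (l %| K)%N) B)).
    by apply: ler_sum => i; exact: hterm.
  rewrite big_mkcond /=; apply: (@le_trans _ _ (\sum_(l < K.+1) B)).
    by apply: ler_sum => i _; case: ifP.
  by rewrite sumr_const card_ord mulr_natl.
rewrite normrM normfV normr_nat ler_pdivrMr ?ltr0n //.
apply: (le_trans hX); rewrite /B le_eqVlt; apply/orP; left; apply/eqP; ring.
Qed.
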